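(* Let $X\in\mathbb{R}^{n\times D}$, $y\in\mathbb{R}^n$, $\lambda_2>0$. Let $\mathcal{Q}$ be a partition of $\{1,\dots,D\}$ and $\mathcal{P}$ a partition of $\{1,\dots,n\}$ such that $(\mathcal{P},\mathcal{Q})$ is equitable on $X$ and $(X^\top y)_{j_1}=(X^\top y)_{j_2}$ whenever $j_1,j_2$ share a color of $\mathcal{Q}$. Set $X'=\Pi_{\mathcal{P}}^{\mathrm{Scaled}}X\Pi_{\mathcal{Q}}$, $y'=\Pi_{\mathcal{P}}^{\mathrm{Scaled}}y$, $W'=\Pi_{\mathcal{P}}^\top\Pi_{\mathcal{P}}$, and let $Q'$ be the $|\mathcal{Q}|\times|\mathcal{Q}|$ diagonal matrix with $Q'_{TT}=\lambda_2|T|$. If $w'\in\mathbb{R}^{|\mathcal{Q}|}$ satisfies $\big((X')^\top W'X'+Q'\big)w'=(X')^\top W'y'$ (the optimality condition of the reduced ridge problem), then $\Pi_{\mathcal{Q}}w'=(X^\top X+\lambda_2I)^{-1}X^\top y$.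
   Context: A partition of a finite set is a set of nonempty pairwise disjoint subsets (''colors'') covering it. A pair $(\mathcal{P},\mathcal{Q})$ of partitions of the row and column indices of $A$ is equitable on $A$ if for every $S\in\mathcal{P}$, $T\in\mathcal{Q}$: $\sum_{j\in T}A_{ij}$ is the same for all $i\in S$ and $\sum_{i\in S}A_{ij}$ is the same for all $j\in T$. For a partition $\mathcal{Q}$ of $\{1,\dots,D\}$, $\Pi_{\mathcal{Q}}\in\{0,1\}^{D\times|\mathcal{Q}|}$ has $(\Pi_{\mathcal{Q}})_{jT}=1$ iff $j\in T$; $\Pi^{\mathrm{Scaled}}_{\mathcal{Q}}\in\mathbb{R}^{|\mathcal{Q}|\times D}$ has entries $1/|T|$ if $j\in T$ and $0$ otherwise; similarly for $\mathcal{P}$. *)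

(* Defs.v *)
From HB Require Import structures.
From mathcomp Require Import all_boot all_order all_algebra.
Set Implicit Arguments. Unset Strict Implicit. Unset Printing Implicit Defensive.
Import Order.TTheory GRing.Theory Num.Theory.
Local Open Scope ring_scope.

(* A partition of {0,...,N-1} is a set of colours P : {set {set 'I_N}}
   with [partition P [set: 'I_N]] (nonempty, pairwise disjoint, covering). *)
Definition color (N : nat) (P : {set {set 'I_N}}) (k : 'I_#|P|) : {set 'I_N} :=
  enum_val k.

Definition Pi (R : pzRingType) (N : nat) (P : {set {set 'I_N}}) : 'M[R]_(N, #|P|) :=
  \matrix_(j < N, k < #|P|) (if j \in color k then 1 else 0).

Definition PiScaled (R : fieldType) (N : nat) (P : {set {set 'I_N}}) : 'M[R]_(#|P|, N) :=
  \matrix_(k < #|P|, j < N) (if j \in color k then (#|color k|%:R)^-1 else 0).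

Definition equitable (R : pzRingType) (m d : nat) (P : {set {set 'I_m}})
  (Q : {set {set 'I_d}}) (A : 'M[R]_(m, d)) : Prop :=
  forall S T, S \in P -> T \in Q ->
    (forall i1 i2, i1 \in S -> i2 \in S ->
       \sum_(j in T) A i1 j = \sum_(j in T) A i2 j) /\
    (forall j1 j2, j1 \in T -> j2 \in T ->
       \sum_(i in S) A i j1 = \sum_(i in S) A i j2).

(* Main.v *)
Require Import Defs.
From HB Require Import structures.
From mathcomp Require Import all_boot all_order all_algebra.
Import Order.TTheory GRing.Theory Num.Theory.
Set Implicit Arguments. Unset Strict Implicit.
Local Open Scope ring_scope.

Lemma color_in N (P : {set {set 'I_N}}) (k : 'I_#|P|) : color k \in P.
Proof. exact: enum_valP. Qed.

Lemma color_ex N (P : {set {set 'I_N}}) : partition P [set: 'I_N] ->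
  forall i, exists k : 'I_#|P|, i \in color k.
Proof.
move=> /and3P[/eqP hc _ _] i.
have : i \in cover P by rewrite hc inE.
case/bigcupP=> T TP iT.
exists (enum_rank_in TP T); by rewrite /color enum_rankK_in.
Qed.

Lemma color_uniq N (P : {set {set 'I_N}}) : partition P [set: 'I_N] ->
  forall i (k1 k2 : 'I_#|P|), i \in color k1 -> i \in color k2 -> k1 = k2.
Proof.
move=> /and3P[_ ht _] i k1 k2 h1 h2.
have e : color k1 = color k2.
  case: (eqVneq (color k1) (color k2)) => // ne.
  have := trivIsetP ht _ _ (@color_in _ _ k1) (@color_in _ _ k2) ne.
  by move/pred0P/(_ i); rewrite /= h1 h2.
by apply: enum_val_inj.
Qed.

Lemma card_color_pos N (P : {set {set 'I_N}}) : partition P [set: 'I_N] ->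
  forall k : 'I_#|P|, (0 < #|color k|)%N.
Proof.
move=> /and3P[_ _ h0] k; rewrite card_gt0; apply/negP=> /eqP e.
by move: (@color_in _ _ k); rewrite e (negbTE h0).
Qed.

Lemma card_color_neq0 (R : numFieldType) N (P : {set {set 'I_N}}) :
  partition P [set: 'I_N] -> forall k : 'I_#|P|, (#|color k|%:R : R) != 0.
Proof. by move=> hP k; rewrite pnatr_eq0 -lt0n card_color_pos. Qed.

Lemma sum_color (R : numFieldType) N (P : {set {set 'I_N}}) :
  partition P [set: 'I_N] -> forall i (k0 : 'I_#|P|) (f : 'I_#|P| -> R),
  i \in color k0 ->
  \sum_k (if i \in color k then 1 else 0) * f k = f k0.
Proof.
move=> hP i k0 f h0; rewrite (bigD1 k0) //= h0 mul1r big1 ?addr0 // => k nk.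
case: ifP => [hk|]; last by rewrite mul0r.
by move: nk; rewrite (color_uniq hP hk h0) eqxx.
Qed.

Lemma PtP_E (R : numFieldType) N (P : {set {set 'I_N}}) :
  partition P [set: 'I_N] -> forall k l,
  ((Pi R P)^T *m Pi R P) k l = if k == l then #|color k|%:R else 0.
Proof.
move=> hP k l; rewrite !mxE; under eq_bigr do rewrite !mxE.
case: eqP => [<-|ne].
  rewrite (eq_bigr (fun i => if i \in color k then 1 else 0)); last first.
    by move=> i _; case: ifP; rewrite ?mulr1 ?mulr0.
  by rewrite -big_mkcond /= sumr_const.
apply: big1 => i _; case: ifP => hk; case: ifP => hl; rewrite ?mulr0 ?mul0r //.
by case: ne; apply: (color_uniq hP hk hl).
Qed.

Lemma PsP_E (R : numFieldType) N (P : {set {set 'I_N}}) :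
  partition P [set: 'I_N] -> PiScaled R P *m Pi R P = 1%:M.
Proof.
move=> hP; apply/matrixP => k l; rewrite !mxE; under eq_bigr do rewrite !mxE.
case: eqP => [<-|ne].
  rewrite (eq_bigr (fun i => if i \in color k then (#|color k|%:R)^-1 else 0)); last first.
    by move=> i _; case: ifP; rewrite ?mulr1 ?mulr0.
  rewrite -big_mkcond /= sumr_const -[_ *+ _]mulr_natr mulVf //.
  exact: card_color_neq0.
apply: big1 => i _; case: ifP => hk; case: ifP => hl; rewrite ?mulr0 ?mul0r //.
by case: ne; apply: (color_uniq hP hk hl).
Qed.

Lemma PtPPs (R : numFieldType) N (P : {set {set 'I_N}}) :
  partition P [set: 'I_N] ->
  (Pi R P)^T *m Pi R P *m PiScaled R P = (Pi R P)^T.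
Proof.
move=> hP; apply/matrixP => k i; rewrite mxE.
under eq_bigr do rewrite PtP_E //.
rewrite (bigD1 k) //= eqxx big1 ?addr0 => [|l]; last first.
  by rewrite eq_sym => /negbTE ->; rewrite mul0r.
rewrite !mxE; case: ifP; rewrite ?mulr0 // mulfV //.
exact: card_color_neq0.
Qed.

Lemma PPs_E (R : numFieldType) N (P : {set {set 'I_N}}) :
  partition P [set: 'I_N] -> forall i j (k : 'I_#|P|), i \in color k ->
  (Pi R P *m PiScaled R P) i j = PiScaled R P k j.
Proof.
move=> hP i j k hk; rewrite mxE.
under eq_bigr do rewrite mxE.
exact: sum_color.
Qed.

Lemma PPs_sym (R : numFieldType) N (P : {set {set 'I_N}}) :
  partition P [set: 'I_N] ->
  (Pi R P *m PiScaled R P)^T = Pi R P *m PiScaled R P.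
Proof.
move=> hP; apply/matrixP => i j; rewrite mxE.
have [ki hi] := color_ex hP i; have [kj hj] := color_ex hP j.
rewrite (@PPs_E R N P hP j i kj hj) (@PPs_E R N P hP i j ki hi) !mxE.
case: (eqVneq ki kj) => [e|ne]; first by subst; rewrite hi hj.
case: ifP => h1; first by case/eqP: ne; apply: (color_uniq hP hi h1).
case: ifP => h2 //; by case/eqP: ne; apply: (color_uniq hP h2 hj).
Qed.

Lemma PPs_const (R : numFieldType) N m (P : {set {set 'I_N}}) (Z : 'M[R]_(N, m)) :
  partition P [set: 'I_N] ->
  (forall (k : 'I_#|P|) i1 i2 c, i1 \in color k -> i2 \in color k -> Z i1 c = Z i2 c) ->
  Pi R P *m PiScaled R P *m Z = Z.
Proof.
move=> hP hZ; apply/matrixP => i c; rewrite mxE.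
have [ki hi] := color_ex hP i.
under eq_bigr do rewrite (@PPs_E R N P hP i _ ki hi) mxE.
rewrite (bigID (fun j => j \in color ki)) /= [X in _ + X]big1 ?addr0; last first.
  by move=> j /negbTE ->; rewrite mul0r.
under eq_bigr => j hj do rewrite hj (hZ ki j i c hj hi).
rewrite sumr_const -mulrnAl -[_ *+ _]mulr_natr mulVf ?mul1r //.
exact: card_color_neq0.
Qed.

Lemma PtP_inj (R : numFieldType) N (P : {set {set 'I_N}}) (u : 'cV[R]_#|P|) :
  partition P [set: 'I_N] ->
  (Pi R P)^T *m Pi R P *m u = 0 -> u = 0.
Proof.
move=> hP /matrixP h; apply/matrixP => k c; have := h k c.
rewrite !mxE; under eq_bigr do rewrite PtP_E //.
rewrite (bigD1 k) //= eqxx big1 ?addr0 => [|l]; last first.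
  by rewrite eq_sym => /negbTE ->; rewrite mul0r.
move/eqP; rewrite mulf_eq0 (negbTE (card_color_neq0 _ hP k)) /= => /eqP ->.
by [].
Qed.

Lemma sqn_E (R : realFieldType) k (w : 'rV[R]_k) :
  (w *m w^T) 0 0 = \sum_j w 0 j ^+ 2.
Proof. by rewrite mxE; apply: eq_bigr => j _; rewrite mxE expr2. Qed.

Lemma sqn_ge0 (R : realFieldType) k (w : 'rV[R]_k) : 0 <= (w *m w^T) 0 0.
Proof. by rewrite sqn_E; apply: sumr_ge0 => j _; exact: sqr_ge0. Qed.

Lemma sqn_eq0 (R : realFieldType) k (w : 'rV[R]_k) : (w *m w^T) 0 0 = 0 -> w = 0.
Proof.
rewrite sqn_E => /eqP; rewrite psumr_eq0 => [/allP h|j _]; last exact: sqr_ge0.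
apply/matrixP => i j; rewrite (ord1 i) mxE.
by have := h j (mem_index_enum j); rewrite /= sqrf_eq0 => /eqP.
Qed.

Lemma ridge_unit (R : realFieldType) n D (X : 'M[R]_(n, D)) (l : R) :
  0 < l -> X^T *m X + l%:M \in unitmx.
Proof.
move=> hl; rewrite -row_free_unit -kermx_eq0.
set K := kermx _; have hK : K *m (X^T *m X + l%:M) = 0 by exact: mulmx_ker.
apply/eqP/row_matrixP => i; rewrite row0.
set v := row i K.
have hv : v *m (X^T *m X + l%:M) = 0 by rewrite /v -row_mul hK row0.
have e : (v *m (X^T *m X + l%:M) *m v^T) 0 0 = 0 by rewrite hv mul0mx mxE.
move: e; rewrite mulmxDr mulmxDl mul_mx_scalar -scalemxAl mxE [X in _ + X]mxE.
have -> : v *m (X^T *m X) *m v^T = (v *m X^T) *m (v *m X^T)^T.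
  by rewrite trmx_mul trmxK !mulmxA.
move/eqP; rewrite paddr_eq0 ?sqn_ge0 ?mulr_ge0 ?sqn_ge0 ?ltW //.
case/andP=> _; rewrite mulf_eq0 (gt_eqF hl) /= => /eqP.
exact: sqn_eq0.
Qed.

Lemma mulPi_E (R : numFieldType) m N (P : {set {set 'I_N}}) (M : 'M[R]_(m, N)) a k :
  (M *m Pi R P) a k = \sum_(i in color k) M a i.
Proof.
rewrite mxE [RHS]big_mkcond /=; apply: eq_bigr => i _; rewrite mxE.
by case: ifP; rewrite ?mulr1 ?mulr0.
Qed.

Unset Implicit Arguments. Set Strict Implicit.
Theorem mainTheorem8 (R : realFieldType) (n D : nat)
  (X : 'M[R]_(n, D)) (y : 'cV[R]_n) (lambda2 : R)
  (P : {set {set 'I_n}}) (Q : {set {set 'I_D}})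
  (w' : 'cV[R]_#|Q|) :
  0 < lambda2 ->
  partition Q [set: 'I_D] ->
  partition P [set: 'I_n] ->
  equitable P Q X ->
  (forall T j1 j2, T \in Q -> j1 \in T -> j2 \in T ->
     (X^T *m y) j1 0 = (X^T *m y) j2 0) ->
  let X' := PiScaled R P *m X *m Pi R Q in
  let y' := PiScaled R P *m y in
  let W' := (Pi R P)^T *m Pi R P in
  let Q' : 'M[R]_#|Q| :=
    \matrix_(a, b) (if a == b then lambda2 * (#|@color D Q a|%:R) else 0) in
  (X'^T *m W' *m X' + Q') *m w' = X'^T *m W' *m y' ->
  Pi R Q *m w' = invmx (X^T *m X + lambda2%:M) *m X^T *m y.
Proof.
move=> hl hQ hP heq hy X' y' W' Q' H.
set A := Pi R Q; set As := PiScaled R Q; set B := Pi R P; set Ps := PiScaled R P.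
have F2 : B *m Ps *m (X *m A) = X *m A.
  apply: PPs_const => // k i1 i2 c h1 h2; rewrite !mulPi_E.
  by have [+ _] := heq _ _ (color_in k) (color_in c); apply.
have F3 : A *m As *m (X^T *m B) = X^T *m B.
  apply: PPs_const => // k j1 j2 c h1 h2; rewrite !mulPi_E.
  under eq_bigr do rewrite mxE; under [RHS]eq_bigr do rewrite mxE.
  by have [_ +] := heq _ _ (color_in c) (color_in k); apply.
have F4 : A *m As *m (X^T *m y) = X^T *m y.
  apply: PPs_const => // k j1 j2 c h1 h2; rewrite (ord1 c).
  exact: (hy _ _ _ (color_in k)).
have K1 : X'^T *m W' = A^T *m X^T *m B.
  rewrite /X' /W' !trmx_mul -!mulmxA; congr (_ *m (_ *m _)).
  have := PtPPs R hP; rewrite -/B -/Ps => e.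
  by rewrite -[RHS]trmxK -[in RHS]e !trmx_mul trmxK.
have K2 : X'^T *m W' *m X' = A^T *m (X^T *m X) *m A.
  rewrite K1 /X' -/B -/Ps -/A.
  transitivity (A^T *m X^T *m (B *m Ps *m (X *m A))); first by rewrite !mulmxA.
  by rewrite F2 !mulmxA.
have K3 : X'^T *m W' *m y' = A^T *m (X^T *m y).
  rewrite K1 /y' -/Ps.
  have : (B *m Ps)^T *m (X *m A) = X *m A by rewrite (PPs_sym R hP) F2.
  move/(congr1 trmx); rewrite trmx_mul trmxK trmx_mul => e.
  transitivity ((A^T *m X^T *m (B *m Ps)) *m y); first by rewrite !mulmxA.
  by rewrite e mulmxA.
have K4 : Q' = lambda2 *: (A^T *m A).
  apply/matrixP => a b; rewrite mxE [in RHS]mxE PtP_E //; case: eqP => _.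
    by [].
  by rewrite mulr0.
set M0 := X^T *m X + lambda2%:M.
set z := M0 *m (A *m w') - X^T *m y.
have Hz : A^T *m z = 0.
  move: H; rewrite K2 K3 K4 /z /M0 mulmxDl -scalemxAl mulmxBr => <-.
  rewrite mulmxDl !mulmxDr mul_scalar_mx -!scalemxAr !mulmxA.
  by rewrite subrr.
have Ez : A *m As *m z = z.
  rewrite /z /M0 !mulmxBr mulmxDl !mulmxDr F4; congr (_ - _).
  have -> : X^T *m X *m (A *m w') = X^T *m B *m (Ps *m (X *m A) *m w').
    transitivity (X^T *m (B *m Ps *m (X *m A)) *m w'); last by rewrite !mulmxA.
    by rewrite F2 !mulmxA.
  rewrite mulmxA F3; congr (_ + _).
  rewrite !mul_scalar_mx !scalemxAr.
  by rewrite mulmxA -(mulmxA A) (PsP_E R hQ) mulmx1.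
have zs : As *m z = 0.
  apply: (PtP_inj hQ); rewrite -/A -mulmxA (mulmxA A) Ez; exact: Hz.
have z0 : z = 0 by rewrite -Ez -mulmxA zs mulmx0.
have hu := ridge_unit X hl.
rewrite -mulmxA -[Pi R Q *m w'](mulKmx hu); congr (_ *m _).
by move/eqP: z0; rewrite subr_eq0 => /eqP.
Qed.
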